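(* Let $V$ be a real vector space. Every maximal chain of vector subspaces of $V$ contains a unique basic subchain, and conversely every basic chain of vector subspaces of $V$ is contained in a unique maximal chain.
   Context: A chain of vector subspaces of $V$ is a set $F=\{F_a\}_{a\in A}$ of subspaces such that for $a\ne b$ one has a proper inclusion $F_a\subsetneq F_b$ or $F_b\subsetneq F_a$. A chain is maximal if it is not properly contained in another chain. A chain $F$ is basic if it is minimal (with respect to inclusion of chains) among chains with the following property: for every $x\in V$ there exist $F_a\subset F_b$ in $F$ with $\dim F_b/F_a=1$ and $x\in F_b\setminus F_a$. *)

(* Defs.v *)
From HB Require Import structures.
From mathcomp Require Import all_boot all_order all_algebra.
From mathcomp Require Import boolp classical_sets reals.
Set Implicit Arguments. Unset Strict Implicit. Unset Printing Implicit Defensive.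
Import GRing.Theory.
Local Open Scope ring_scope.
Local Open Scope classical_set_scope.

Section Chains.
Variables (R : realType) (V : lmodType R).

Definition subspace (U : set V) : Prop :=
  U 0 /\ (forall x y, U x -> U y -> U (x + y)) /\
  (forall (a : R) x, U x -> U (a *: x)).

Definition chain (F : set (set V)) : Prop :=
  (forall U, F U -> subspace U) /\
  (forall U W, F U -> F W -> U <> W -> U `<` W \/ W `<` U).

Definition maximal_chain (F : set (set V)) : Prop :=
  chain F /\ (forall G, chain G -> F `<=` G -> G = F).

(* A ⊆ B and dim (B / A) = 1, written out: the quotient B/A is spanned by
   the class of some v in B \ A *)
Definition codim1 (A B : set V) : Prop :=
  A `<=` B /\ exists v, B v /\ ~ A v /\
    (forall y, B y -> exists a (c : R), A a /\ y = a + c *: v).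

Definition separating (F : set (set V)) : Prop :=
  forall x : V, x <> 0 -> exists A B, F A /\ F B /\ A `<=` B /\
    codim1 A B /\ B x /\ ~ A x.

Definition basic_chain (F : set (set V)) : Prop :=
  chain F /\ separating F /\
  (forall G, chain G -> separating G -> G `<=` F -> G = F).

End Chains.

(* Main.v *)
Require Import Defs.
From HB Require Import structures.
From mathcomp Require Import all_boot all_order all_algebra.
From mathcomp Require Import boolp classical_sets reals.
Set Implicit Arguments. Unset Strict Implicit. Unset Printing Implicit Defensive.
Import GRing.Theory.
Local Open Scope ring_scope.
Local Open Scope classical_set_scope.

Section L.
Variables (R : realType) (V : lmodType R).
Implicit Types (U W A B : set V) (F G : set (set V)).

Lemma sub0 U : subspace U -> U 0. Proof. by case. Qed.
Lemma subD U x y : subspace U -> U x -> U y -> U (x + y).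
Proof. by case=> _ [] h _; apply: h. Qed.
Lemma subZ U (a : R) x : subspace U -> U x -> U (a *: x).
Proof. by case=> _ [] _ h; apply: h. Qed.
Lemma subB U x y : subspace U -> U x -> U y -> U (x - y).
Proof. move=> sU Ux Uy; rewrite -scaleN1r; apply: subD => //; exact: subZ. Qed.

Lemma chain_le F : (forall U, F U -> subspace U) ->
  (forall U W, F U -> F W -> U `<=` W \/ W `<=` U) -> chain F.
Proof.
move=> h1 h2; split => // U W FU FW neq.
case: (h2 U W FU FW) => h; [left|right]; split => // h'; apply: neq;
  apply/seteqP; split => //.
Qed.

Lemma chain_le_inv F U W : chain F -> F U -> F W -> U `<=` W \/ W `<=` U.
Proof.
case=> _ h FU FW; have [->|neq] := pselect (U = W); first by left.
by case: (h U W FU FW neq) => -[]; [left|right].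
Qed.

Lemma chain_subsp F U : chain F -> F U -> subspace U.
Proof. by case=> h _; apply: h. Qed.

Lemma chain_sub F G : chain F -> G `<=` F -> chain G.
Proof.
move=> cF GF; apply: chain_le => [U GU|U W GU GW]; first exact: (chain_subsp cF (GF _ GU)).
exact: chain_le_inv cF (GF _ GU) (GF _ GW).
Qed.

Lemma max_add F W : maximal_chain F -> subspace W ->
  (forall U, F U -> U `<=` W \/ W `<=` U) -> F W.
Proof.
move=> [cF mF] sW h.
have e : F `|` [set W] = F.
  apply: mF; last by move=> U FU; left.
  apply: chain_le => [U [FU| ->]|U U' [FU| ->] [FU'| ->]] //.
  - exact: chain_subsp cF FU.
  - exact: chain_le_inv cF FU FU'.
  - exact: h.
  - by case: (h _ FU') => ?; [right|left].
  - by left.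
by rewrite -e; right.
Qed.

Definition Ax F x := [set y : V | y = 0 \/ exists U, F U /\ ~ U x /\ U y].
Definition Bx F x := [set y : V | forall U, F U -> U x -> U y].

Section M.
Variables (F : set (set V)) (mF : maximal_chain F).
Let cF : chain F. Proof. by case: mF. Qed.

Lemma below_x U W x : F U -> F W -> U x -> ~ W x -> W `<=` U.
Proof. by move=> FU FW Ux Wx; case: (chain_le_inv cF FU FW) => // h; case: Wx; apply: h. Qed.

Lemma Bx_sub x : subspace (Bx F x).
Proof.
split; first by move=> U FU _; apply: sub0; exact: chain_subsp cF FU.
split=> [y z hy hz U FU Ux|a y hy U FU Ux].
  by apply: subD; [exact: chain_subsp cF FU|apply: hy|apply: hz].
by apply: subZ; [exact: chain_subsp cF FU|apply: hy].
Qed.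

Lemma Ax_sub x : subspace (Ax F x).
Proof.
split; first by left.
split=> [y z [->|[U [FU [Ux Uy]]]] [->|[W [FW [Wx Wz]]]]|a y [->|[U [FU [Ux Uy]]]]].
- by left; rewrite addr0.
- by right; exists W; rewrite add0r.
- by right; exists U; rewrite addr0.
- right; case: (chain_le_inv cF FU FW) => h.
    by exists W; split => //; split => //; apply: subD => //; [exact: chain_subsp cF FW|exact: h].
  by exists U; split => //; split => //; apply: subD => //; [exact: chain_subsp cF FU|exact: h].
- by left; rewrite scaler0.
- by right; exists U; split => //; split => //; apply: subZ => //; exact: chain_subsp cF FU.
Qed.

Lemma Ax_le W x : F W -> ~ W x -> W `<=` Ax F x.
Proof. by move=> FW Wx y Wy; right; exists W. Qed.

Lemma Ax_ge W x : F W -> W x -> Ax F x `<=` W.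
Proof.
move=> FW Wx y [->|[U [FU [Ux Uy]]]]; first by apply: sub0; exact: chain_subsp cF FW.
exact: below_x FW FU Wx Ux _ Uy.
Qed.

Lemma Bx_le W x : F W -> W x -> Bx F x `<=` W.
Proof. by move=> FW Wx y; apply. Qed.

Lemma Bx_ge W x : F W -> ~ W x -> W `<=` Bx F x.
Proof. by move=> FW Wx y Wy U FU Ux; exact: below_x FU FW Ux Wx _ Wy. Qed.

Lemma Bx_x x : Bx F x x.
Proof. by move=> U. Qed.

Lemma Ax_notx x : x <> 0 -> ~ Ax F x x.
Proof. by move=> x0 [//|[U [_ []]]]. Qed.

Lemma AxBx x : Ax F x `<=` Bx F x.
Proof. by move=> y Ay U FU Ux; exact: Ax_ge FU Ux _ Ay. Qed.

Lemma Ax_in x : F (Ax F x).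
Proof.
apply: (max_add mF); first exact: Ax_sub.
move=> U FU; have [Ux|Ux] := pselect (U x).
  by right; exact: Ax_ge.
by left; exact: Ax_le.
Qed.

Lemma Bx_in x : F (Bx F x).
Proof.
apply: (max_add mF); first exact: Bx_sub.
move=> U FU; have [Ux|Ux] := pselect (U x).
  by right; exact: Bx_le.
by left; exact: Bx_ge.
Qed.

Lemma codimx x : x <> 0 -> codim1 (Ax F x) (Bx F x).
Proof.
move=> x0; split; first exact: AxBx.
exists x; split; first exact: Bx_x.
split; first exact: Ax_notx.
pose W := [set y : V | exists a (c : R), Ax F x a /\ y = a + c *: x].
have sA := Ax_sub x.
have sW : subspace W.
  split; first by exists 0, 0; split; [left|rewrite scale0r addr0].
  split=> [y z [a [c [Aa ->]]] [b [d [Ab ->]]]|k y [a [c [Aa ->]]]].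
    exists (a + b), (c + d); split; first exact: subD.
    by rewrite scalerDl addrACA.
  exists (k *: a), (k * c); split; first exact: subZ.
  by rewrite scalerDr scalerA.
have FW : F W.
  apply: (max_add mF) => // U FU; have [Ux|Ux] := pselect (U x).
    right => _ [a [c [Aa ->]]]; have sU := chain_subsp cF FU.
    apply: subD => //; last exact: subZ.
    exact: Ax_ge FU Ux _ Aa.
  left => y Uy; exists y, 0; split; first exact: Ax_le FU Ux _ Uy.
  by rewrite scale0r addr0.
have Wx : W x by exists 0, 1; split; [left|rewrite scale1r add0r].
by move=> y /(Bx_le FW Wx) [a [c [Aa ->]]]; exists a, c.
Qed.

Lemma keyK A B x : F A -> F B -> codim1 A B -> B x -> ~ A x ->
  A = Ax F x /\ B = Bx F x.
Proof.
move=> FA FB [AB [v [Bv [Av hv]]]] Bx' Ax'.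
have sA := chain_subsp cF FA; have sB := chain_subsp cF FB.
have x0 : x <> 0 by move=> e; apply: Ax'; rewrite e; exact: sub0.
have [a0 [c0 [Aa0 ex]]] := hv x Bx'.
have c00 : c0 != 0.
  apply/eqP => e; apply: Ax'; by rewrite ex e scale0r addr0.
have ev : v = c0^-1 *: (x - a0).
  by rewrite ex addrAC subrr add0r scalerA mulVf // scale1r.
have ABx : A `<=` Bx F x := Bx_ge FA Ax'.
split; apply/seteqP; split.
- exact: Ax_le.
- move=> y Ay.
  have By : B y by apply: (Bx_le FB Bx'); exact: AxBx.
  have [a [c [Aa ey]]] := hv y By.
  have [c0'|cn0] := eqVneq c 0.
    by rewrite ey c0' scale0r addr0.
  have sAx := Ax_sub x.
  have Av' : Ax F x v.
    have -> : v = c^-1 *: (y - a).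
      by rewrite ey addrAC subrr add0r scalerA mulVf // scale1r.
    apply: subZ => //; apply: subB => //; exact: Ax_le FA Ax' _ Aa.
  exfalso; apply: (Ax_notx x0).
  suff : Ax F x (a0 + c0 *: v) by rewrite -ex.
  apply: subD => //; last exact: subZ.
  exact: Ax_le FA Ax' _ Aa0.
- move=> y By; have [a [c [Aa ->]]] := hv y By.
  have sBx := Bx_sub x.
  apply: (subD sBx); first exact: ABx.
  apply: (subZ _ sBx); rewrite ev; apply: (subZ _ sBx); apply: (subB sBx).
    exact: Bx_x.
  exact: ABx.
- exact: Bx_le.
Qed.

Definition Gmin := [set U | exists x : V, x <> 0 /\ (U = Ax F x \/ U = Bx F x)].

Lemma Gmin_sub : Gmin `<=` F.
Proof. by move=> U [x [_ [->|->]]]; [exact: Ax_in|exact: Bx_in]. Qed.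

Lemma Gmin_sep : separating Gmin.
Proof.
move=> x x0; exists (Ax F x), (Bx F x).
split; first by exists x; split=> //; left.
split; first by exists x; split=> //; right.
split; first exact: AxBx.
split; first exact: codimx.
split; [exact: Bx_x|exact: Ax_notx].
Qed.

Lemma Gmin_least G : G `<=` F -> separating G -> Gmin `<=` G.
Proof.
move=> GF sG U [x [x0 eU]].
have [A [B [GA [GB [_ [cAB [Bx' Ax']]]]]]] := sG x x0.
have [eA eB] := keyK (GF _ GA) (GF _ GB) cAB Bx' Ax'.
by case: eU => ->; [rewrite -eA|rewrite -eB].
Qed.

End M.
End L.

Section Main.
Variables (R : realType) (V : lmodType R).

Lemma uniq_max (G F1 F2 : set (set V)) : maximal_chain F1 -> maximal_chain F2 ->
  G `<=` F1 -> G `<=` F2 -> separating G -> F1 = F2.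
Proof.
move=> mF1 mF2 GF1 GF2 sG.
have cF1 : chain F1 by case: mF1.
have cF2 : chain F2 by case: mF2.
have hmin := Gmin_least mF1 GF1 sG.
have eA x : x <> 0 -> Ax F1 x = Ax F2 x.
  move=> x0.
  have FA : F2 (Ax F1 x) by apply: GF2; apply: hmin; exists x; split=> //; left.
  have FB : F2 (Bx F1 x) by apply: GF2; apply: hmin; exists x; split=> //; right.
  have [-> _] := keyK mF2 FA FB (codimx mF1 x0) (@Bx_x _ _ F1 x) (@Ax_notx _ _ F1 x x0).
  by [].
have cmp W W' : F1 W -> F2 W' -> W `<=` W' \/ W' `<=` W.
  move=> FW FW'.
  have [h|n1] := pselect (W `<=` W'); first by left.
  have [h|n2] := pselect (W' `<=` W); first by right.
  exfalso.
  have [x [Wx nx]] : exists x, W x /\ ~ W' x.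
    apply: contrapT => h; apply: n1 => z Wz; apply: contrapT => nz; by apply: h; exists z.
  have [y [Wy ny]] : exists y, W' y /\ ~ W y.
    apply: contrapT => h; apply: n2 => z Wz; apply: contrapT => nz; by apply: h; exists z.
  have x0 : x <> 0 by move=> e; apply: nx; rewrite e; apply: sub0; exact: chain_subsp cF2 FW'.
  apply: ny; apply: (Ax_ge mF1 FW Wx); rewrite eA //; exact: Ax_le FW' nx _ Wy.
have cU : chain (F1 `|` F2).
  apply: chain_le => [U [FU|FU]|U W [FU|FU] [FW|FW]].
  - exact: chain_subsp cF1 FU.
  - exact: chain_subsp cF2 FU.
  - exact: chain_le_inv cF1 FU FW.
  - exact: cmp.
  - by case: (cmp _ _ FW FU) => ?; [right|left].
  - exact: chain_le_inv cF2 FU FW.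
have e1 : F1 `|` F2 = F1 by apply: mF1.2 cU _ => z; left.
have F21 : F2 `<=` F1 by rewrite -e1 => z; right.
by apply: mF2.2.
Qed.

Lemma lemma4_aux :
  (forall F : set (set V), maximal_chain F ->
     exists! G : set (set V), G `<=` F /\ basic_chain G) /\
  (forall G : set (set V), basic_chain G ->
     exists! F : set (set V), maximal_chain F /\ G `<=` F).
Proof.
split.
  move=> F mF; have cF : chain F by case: mF.
  have GF := Gmin_sub mF.
  exists (Gmin F); split.
    split=> //; split; first exact: chain_sub cF GF.
    split; first exact: Gmin_sep mF.
    move=> G cG sG GG; apply/seteqP; split=> //.
    apply: (Gmin_least mF) => // z Gz; exact: GF (GG _ Gz).
  move=> G' [G'F [cG' [sG' mG']]].
  apply: mG'; [exact: chain_sub cF GF|exact: Gmin_sep mF|].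
  apply: (Gmin_least mF) => //.
move=> G [cG [sG mG]].
have hZ : forall Fs : set (set (set V)), Fs `<=` [set H | chain (H `|` G)] ->
  total_on Fs subset -> chain (\bigcup_(X in Fs) X `|` G).
  move=> Fs FsP tot.
  have hc : forall U W, (\bigcup_(X in Fs) X `|` G) U -> (\bigcup_(X in Fs) X `|` G) W ->
      exists H, chain H /\ H U /\ H W.
    move=> U W [[X1 FX1 X1U]|GU] [[X2 FX2 X2W]|GW].
    - case: (tot X1 X2 FX1 FX2) => h.
        by exists (X2 `|` G); split; [exact: FsP|split; left; [exact: h|]].
      by exists (X1 `|` G); split; [exact: FsP|split; left; [|exact: h]].
    - by exists (X1 `|` G); split; [exact: FsP|split; [left|right]].
    - by exists (X2 `|` G); split; [exact: FsP|split; [right|left]].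
    - by exists G.
  apply: chain_le => [U HU|U W HU HW].
    have [H [cH [HU' _]]] := hc U U HU HU; exact: chain_subsp cH HU'.
  have [H [cH [HU' HW']]] := hc U W HU HW; exact: chain_le_inv cH HU' HW'.

have [A [PA mA]] := @Zorn_bigcup (set V) [set H | chain (H `|` G)] hZ.
set F := A `|` G.
have mF : maximal_chain F.
  split=> // H cH FH.
  have GH : G `<=` H by move=> z Gz; apply: FH; right.
  have AH : A `<=` H by move=> z Az; apply: FH; left.
  have PH : chain (H `|` G).
    have -> : H `|` G = H by apply/seteqP; split=> [z [//|/GH]|z Hz]; [|left].
    exact: cH.
  have [HA|nHA] := pselect (H `<=` A).
    apply/seteqP; split=> // z Hz; left; exact: HA.
  by exfalso; apply: (mA H) PH; split.
exists F; split; first by split=> // z Gz; right.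
move=> F' [mF' GF']; apply: uniq_max mF mF' _ GF' sG.
by move=> z Gz; right.
Qed.

End Main.

Theorem lemma4 (R : realType) (V : lmodType R) :
  (forall F : set (set V), maximal_chain F ->
     exists! G : set (set V), G `<=` F /\ basic_chain G) /\
  (forall G : set (set V), basic_chain G ->
     exists! F : set (set V), maximal_chain F /\ G `<=` F).
Proof. exact: (@lemma4_aux R V). Qed.
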